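(* With $\nu^{(n)}(\epsilon_0)$ and $\nu^{(n)}(\epsilon_1)$ the asymptotic densities of the sets $\{k\in\mathbf{N}:\xi_n(k)\text{ even}\}$ and $\{k\in\mathbf{N}:\xi_n(k)\text{ odd}\}$ respectively, one has $\lim_{n\to\infty}\nu^{(n)}(\epsilon_0)=2/3$ and $\lim_{n\to\infty}\nu^{(n)}(\epsilon_1)=1/3$.
   Context: $\mathbf{N}=\{1,2,3,\dots\}$. The asymptotic density of $K\subseteq\mathbf{N}$ is $\lim_{m\to\infty}\#(K\cap[1,m])/m$ when it exists. The Collatz map $\xi:\mathbf{N}\to\mathbf{N}$ is $\xi(\omega)=\omega/2$ if $\omega$ is even and $\xi(\omega)=3\omega+1$ if $\omega$ is odd; $\xi_n$ denotes its $n$-fold iterate, with $\xi_0$ the identity. *)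

(* Defs.v *)
From Stdlib Require Import Reals Arith.
Open Scope R_scope.

Definition collatz (w : nat) : nat :=
  if Nat.even w then Nat.div2 w else 3 * w + 1.

Fixpoint collatz_iter (n : nat) (w : nat) : nat :=
  match n with
  | O => w
  | S n' => collatz (collatz_iter n' w)
  end.

Fixpoint count_upto (P : nat -> bool) (m : nat) : nat :=
  match m with
  | O => O
  | S m' => (if P (S m') then 1 else 0) + count_upto P m'
  end%nat.

Definition has_density (P : nat -> bool) (d : R) : Prop :=
  Un_cv (fun m => INR (count_upto P m) / INR m) d.

(* Main.v *)
Require Import Defs.
From Stdlib Require Import Reals Arith Lia Lra Psatz.
Open Scope R_scope.

Fixpoint cnt0 (f : nat -> bool) (n : nat) : nat :=
  match n with O => O | S n' => (cnt0 f n' + (if f n' then 1 else 0))%nat end.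

Lemma cnt0_ext f g n : (forall i, f i = g i) -> cnt0 f n = cnt0 g n.
Proof. intros H; induction n; simpl; [reflexivity| rewrite IHn, H; reflexivity]. Qed.

Lemma cnt0_S f n : cnt0 f (S n) = (cnt0 f n + (if f n then 1 else 0))%nat.
Proof. reflexivity. Qed.

Lemma cnt0_add f n m : cnt0 f (n+m) = (cnt0 f n + cnt0 (fun j => f (n+j)%nat) m)%nat.
Proof.
  induction m; simpl. - rewrite Nat.add_0_r; lia.
  - rewrite Nat.add_succ_r; simpl; rewrite IHm; lia.
Qed.

Lemma cnt0_double f n : cnt0 f (2*n) =
  (cnt0 (fun i => f (2*i)%nat) n + cnt0 (fun i => f (2*i+1)%nat) n)%nat.
Proof.
  induction n. - reflexivity.
  - replace (2 * S n)%nat with (S (S (2*n))) by lia. rewrite !cnt0_S.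
    rewrite IHn. replace (S (2*n)) with (2*n+1)%nat by lia. lia.
Qed.

Lemma cnt0_double2 f n g h : (forall i, f (2*i)%nat = g i) -> (forall i, f (2*i+1)%nat = h i) ->
  cnt0 f (2*n) = (cnt0 g n + cnt0 h n)%nat.
Proof. intros H1 H2. rewrite cnt0_double. f_equal; apply cnt0_ext; auto. Qed.

Lemma eqb_mod_congr x y M r : x = y -> ((x mod M) =? r)%nat = ((y mod M) =? r)%nat.
Proof. intros ->; reflexivity. Qed.

Lemma cnt0_false f n : (forall i, f i = false) -> cnt0 f n = O.
Proof. intros H; induction n; simpl; [reflexivity| rewrite IHn, H; reflexivity]. Qed.

Lemma cnt0_le f n : (cnt0 f n <= n)%nat.
Proof. induction n; simpl; [lia| destruct (f n); lia]. Qed.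

Lemma mod_key M x e : (0 < M)%nat -> (e < 2)%nat ->
  ((2*x + e) mod (2*M) = 2 * (x mod M) + e)%nat.
Proof.
  intros HM He. symmetry. apply (Nat.mod_unique _ _ (x / M)).
  - pose proof (Nat.mod_upper_bound x M ltac:(lia)). lia.
  - pose proof (Nat.div_mod_eq x M). lia.
Qed.

Lemma key M x e f r : (0 < M)%nat -> (e < 2)%nat -> (f < 2)%nat ->
  (((2*x + e) mod (2*M)) =? 2*r+f)%nat = ((e =? f)%nat && (x mod M =? r)%nat)%bool.
Proof.
  intros HM He Hf. rewrite mod_key by lia.
  destruct (Nat.eqb_spec (2 * (x mod M) + e) (2*r+f)), (Nat.eqb_spec e f),
    (Nat.eqb_spec (x mod M) r); simpl; try reflexivity; lia.
Qed.

Lemma cnt_key M c a e f r N : (0 < M)%nat -> (e < 2)%nat -> (f < 2)%nat ->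
  cnt0 (fun i => ((2*(c*i+a) + e) mod (2*M)) =? 2*r+f)%nat N =
  if (e =? f)%nat then cnt0 (fun i => ((c*i+a) mod M) =? r)%nat N else O.
Proof.
  intros. destruct (e =? f)%nat eqn:E.
  - apply cnt0_ext. intros i. rewrite key by lia. rewrite E. reflexivity.
  - apply cnt0_false. intros i. rewrite key by lia. rewrite E. reflexivity.
Qed.

Lemma pow2_pos L : (0 < 2^L)%nat.
Proof. apply Nat.neq_0_lt_0, Nat.pow_nonzero; lia. Qed.

Lemma base_fact L : forall c a r, Nat.Odd c -> (r < 2^L)%nat ->
  cnt0 (fun j => ((c*j+a) mod 2^L) =? r)%nat (2^L) = 1%nat.
Proof.
  induction L; intros c a r [k Hc] Hr.
  - simpl in *. assert (r = O) by lia. subst. simpl.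
    reflexivity.
  - pose proof (pow2_pos L).
    change (2 ^ S L)%nat with (2 * 2^L)%nat in *.
    destruct (Nat.Even_or_Odd a) as [[a' Ha]|[a' Ha]];
    destruct (Nat.Even_or_Odd r) as [[r' Hr']|[r' Hr']]; subst a r.
    + rewrite <- (Nat.add_0_r (2*r')). rewrite (cnt0_double2 _ _ (fun i => ((2*(c*i+a') + 0) mod (2*2^L)) =? 2*r'+0)%nat
         (fun i => ((2*(c*i+(k+a')) + 1) mod (2*2^L)) =? 2*r'+0)%nat);
        [| intros i; apply eqb_mod_congr; lia | intros i; apply eqb_mod_congr; lia].
      rewrite !cnt_key by lia. simpl. rewrite ?Nat.add_0_r. apply IHL; [exists k; lia| lia].
    + rewrite (cnt0_double2 _ _ (fun i => ((2*(c*i+a') + 0) mod (2*2^L)) =? 2*r'+1)%nat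
         (fun i => ((2*(c*i+(k+a')) + 1) mod (2*2^L)) =? 2*r'+1)%nat);
        [| intros i; apply eqb_mod_congr; lia | intros i; apply eqb_mod_congr; lia].
      rewrite !cnt_key by lia. simpl. rewrite ?Nat.add_0_r. apply IHL; [exists k; lia| lia].
    + rewrite <- (Nat.add_0_r (2*r')). rewrite (cnt0_double2 _ _ (fun i => ((2*(c*i+a') + 1) mod (2*2^L)) =? 2*r'+0)%nat
         (fun i => ((2*(c*i+(k+a'+1)) + 0) mod (2*2^L)) =? 2*r'+0)%nat);
        [| intros i; apply eqb_mod_congr; lia | intros i; apply eqb_mod_congr; lia].
      rewrite !cnt_key by lia. simpl. rewrite ?Nat.add_0_r. apply IHL; [exists k; lia| lia].
    + rewrite (cnt0_double2 _ _ (fun i => ((2*(c*i+a') + 1) mod (2*2^L)) =? 2*r'+1)%nat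
         (fun i => ((2*(c*i+(k+a'+1)) + 0) mod (2*2^L)) =? 2*r'+1)%nat);
        [| intros i; apply eqb_mod_congr; lia | intros i; apply eqb_mod_congr; lia].
      rewrite !cnt_key by lia. simpl. rewrite ?Nat.add_0_r. apply IHL; [exists k; lia| lia].
Qed.

Fixpoint AB (n : nat) : nat * nat :=
  match n with O => (1%nat, 1%nat) | S n' => let p := AB n' in (fst p + 2 * snd p, fst p)%nat end.
Definition A n := fst (AB n).
Definition B n := snd (AB n).

Lemma iter_S n w : collatz_iter (S n) w = collatz_iter n (collatz w).
Proof. induction n; simpl in *; [reflexivity| rewrite <- IHn; reflexivity]. Qed.

Lemma collatz_even' y x : y = (2*x)%nat -> collatz y = x.
Proof. intros ->. unfold collatz. rewrite Nat.even_even, Nat.div2_double. reflexivity. Qed.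

Lemma collatz_odd' y x : y = (2*x+1)%nat -> collatz y = (3*y+1)%nat.
Proof. intros ->. unfold collatz. rewrite Nat.even_odd. reflexivity. Qed.

Definition Sprop n := forall L c a r, (1 <= L)%nat -> Nat.Odd c -> (r < 2^L)%nat ->
  cnt0 (fun j => (collatz_iter n (c*j+a) mod 2^L) =? r)%nat (2^(n+L)) =
  if Nat.even r then A n else B n.

Definition OBval n r := if Nat.even r then (2 * B n)%nat else
  match n with O => O | S n' => (2 * B n')%nat end.

Definition OBprop n := forall L c b r, (1 <= L)%nat -> Nat.Odd c -> Nat.Odd b -> (r < 2^L)%nat ->
  cnt0 (fun i => (collatz_iter n (3*(2*c*i+b)+1) mod 2^L) =? r)%nat (2^(n+L)) = OBval n r.

Lemma cnt0_twice (g : nat -> bool) c N v :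
  (forall a, cnt0 (fun j => g (c*j+a)%nat) N = v) ->
  forall a, cnt0 (fun j => g (c*j+a)%nat) (N+N) = (2*v)%nat.
Proof.
  intros H a. rewrite cnt0_add, H.
  rewrite (cnt0_ext _ (fun j => g (c*j+(a+c*N))%nat)) by (intros j; f_equal; lia).
  rewrite H. lia.
Qed.

Lemma OB0 : OBprop 0.
Proof.
  intros L c b r HL [k Hc] [m Hb] Hr. destruct L as [|L]; [lia|].
  pose proof (pow2_pos L).
  change (2 ^ (0 + S L))%nat with (2^L + (2^L + 0))%nat. rewrite Nat.add_0_r.
  change (2 ^ S L)%nat with (2 * 2^L)%nat in *.
  destruct (Nat.Even_or_Odd r) as [[r' Hr']|[r' Hr']]; subst r.
  - unfold OBval. rewrite Nat.even_even. rewrite <- (Nat.add_0_r (2*r')).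
    rewrite (cnt0_ext _ (fun i => ((2*((3*c)*i+(3*m+2)) + 0) mod (2*2^L)) =? 2*r'+0)%nat)
      by (intros i; apply eqb_mod_congr; simpl; lia).
    rewrite cnt_key by lia. change ((0 =? 0)%nat) with true. cbv iota.
    apply (cnt0_twice (fun x => (x mod 2^L =? r')%nat)).
    intros a. apply base_fact; [exists (3*k+1)%nat; lia | lia].
  - rewrite (cnt0_ext _ (fun i => ((2*((3*c)*i+(3*m+2)) + 0) mod (2*2^L)) =? 2*r'+1)%nat)
      by (intros i; apply eqb_mod_congr; simpl; lia).
    rewrite cnt_key by lia. unfold OBval. rewrite Nat.even_odd. reflexivity.
Qed.

Lemma OBS n : Sprop n -> OBprop (S n).
Proof.
  intros HS L c b r HL [k Hc] [m Hb] Hr.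
  change (2 ^ (S n + L))%nat with (2^(n+L) + (2^(n+L) + 0))%nat.
  rewrite Nat.add_0_r.
  rewrite (cnt0_ext _ (fun i => (fun x => (collatz_iter n x mod 2^L =? r)%nat) ((3*c)*i+(3*m+2))%nat)).
  2:{ intros i. rewrite iter_S. apply eqb_mod_congr. f_equal.
      apply collatz_even'. lia. }
  assert (T := cnt0_twice (fun x => (collatz_iter n x mod 2^L =? r)%nat) (3*c) (2^(n+L))
     (if Nat.even r then A n else B n)).
  cbv beta in T. rewrite T.
  - unfold OBval. destruct (Nat.even r); reflexivity.
  - intros a. apply HS; [lia| exists (3*k+1)%nat; lia | lia].
Qed.

Lemma SS n : Sprop n -> OBprop n -> Sprop (S n).
Proof.
  intros HS HOB L c a r HL [k Hc] Hr.
  change (2 ^ (S n + L))%nat with (2 * 2^(n+L))%nat.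
  destruct (Nat.Even_or_Odd a) as [[a' Ha]|[a' Ha]]; subst a.
  - rewrite (cnt0_double2 _ _ (fun j => (collatz_iter n (c*j+a') mod 2^L) =? r)%nat
      (fun i => (collatz_iter n (3*(2*c*i+(2*(k+a')+1))+1) mod 2^L) =? r)%nat).
    + rewrite HS, HOB by (try lia; try (exists k; lia); exists (k+a')%nat; lia).
      unfold OBval, A, B. destruct (Nat.even r); destruct n; simpl; lia.
    + intros i. rewrite iter_S. apply eqb_mod_congr. f_equal. apply collatz_even'. lia.
    + intros i. rewrite iter_S. apply eqb_mod_congr. f_equal.
      rewrite (collatz_odd' _ (c*i+k+a')) by lia. lia.
  - rewrite (cnt0_double2 _ _
      (fun i => (collatz_iter n (3*(2*c*i+(2*a'+1))+1) mod 2^L) =? r)%nat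
      (fun j => (collatz_iter n (c*j+(k+a'+1)) mod 2^L) =? r)%nat).
    + rewrite HS, HOB by (try lia; try (exists k; lia); exists a'; lia).
      unfold OBval, A, B. destruct (Nat.even r); destruct n; simpl; lia.
    + intros i. rewrite iter_S. apply eqb_mod_congr. f_equal.
      rewrite (collatz_odd' _ (c*i+a')) by lia. lia.
    + intros i. rewrite iter_S. apply eqb_mod_congr. f_equal. apply collatz_even'. lia.
Qed.

Lemma S0 : Sprop 0.
Proof.
  intros L c a r HL Hc Hr.
  replace (if Nat.even r then A 0 else B 0) with 1%nat by (destruct (Nat.even r); reflexivity).
  apply base_fact; assumption.
Qed.

Lemma Sall n : Sprop n /\ OBprop n.
Proof.
  induction n as [|n [IH1 IH2]].
  - split; [apply S0| apply OB0].
  - split; [apply SS; assumption| apply OBS; assumption].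
Qed.

Lemma count_upto_cnt0 P m : count_upto P m = cnt0 (fun j => P (S j)) m.
Proof. induction m; [reflexivity|]. simpl count_upto. rewrite cnt0_S, IHm. lia. Qed.

Lemma cnt0_periodic (P : nat -> bool) p K :
  (forall a, cnt0 (fun j => P (a+j)%nat) p = K) ->
  forall q a, cnt0 (fun j => P (a+j)%nat) (q*p) = (q*K)%nat.
Proof.
  intros H q. induction q; intros a; [reflexivity|].
  replace (S q * p)%nat with (p + q*p)%nat by lia.
  rewrite cnt0_add, H.
  rewrite (cnt0_ext _ (fun j => P ((a+p)+j)%nat)) by (intros j; f_equal; lia).
  rewrite IHq. lia.
Qed.

Lemma density_periodic (P : nat -> bool) p K : (0 < p)%nat ->
  (forall a, cnt0 (fun j => P (a+j)%nat) p = K) ->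
  has_density P (INR K / INR p).
Proof.
  intros Hp H. unfold has_density, Un_cv. intros eps Heps.
  assert (HK : (K <= p)%nat) by (rewrite <- (H O); apply cnt0_le).
  assert (Hpr : 0 < INR p) by (apply lt_0_INR; lia).
  destruct (INR_unbounded (INR p / eps)) as [N HN].
  exists (S N). intros m Hm.
  assert (Hmr : 0 < INR m) by (apply lt_0_INR; lia).
  assert (HmN : INR (S N) <= INR m) by (apply le_INR; lia).
  rewrite S_INR in HmN.
  set (q := (m / p)%nat). set (s := (m mod p)%nat).
  assert (Hms : m = (q*p + s)%nat) by (pose proof (Nat.div_mod_eq m p); unfold q, s; lia).
  assert (Hs : (s < p)%nat) by (apply Nat.mod_upper_bound; lia).
  rewrite count_upto_cnt0.
  rewrite Hms at 1. rewrite cnt0_add.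
  rewrite (cnt0_ext (fun j => P (S j)) (fun j => P (1+j)%nat)) by reflexivity.
  rewrite (cnt0_periodic P p K H q 1).
  set (t := cnt0 _ s).
  assert (Ht : (t <= s)%nat) by apply cnt0_le.
  assert (Hmr2 : INR m = INR q * INR p + INR s) by (rewrite Hms, plus_INR, mult_INR; reflexivity).
  apply le_INR in Ht. apply le_INR in HK. apply lt_INR in Hs.
  assert (Hq : 0 <= INR q) by apply pos_INR.
  assert (Hs0 : 0 <= INR s) by apply pos_INR.
  assert (Ht0 : 0 <= INR t) by apply pos_INR.
  assert (HK0 : 0 <= INR K) by apply pos_INR.
  set (x := INR s * INR K / INR p).
  assert (Hx : x * INR p = INR s * INR K) by (unfold x; field; lra).
  assert (Hx0 : 0 <= x) by (unfold x; apply Rmult_le_pos; [apply Rmult_le_pos; auto| left; apply Rinv_0_lt_compat; lra]).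
  assert (INR s * INR K <= INR p * INR K) by (apply Rmult_le_compat_r; [apply pos_INR| lra]).
  assert (HxK : x <= INR K) by nra.
  unfold R_dist. rewrite plus_INR, mult_INR.
  replace ((INR q * INR K + INR t) / INR m - INR K / INR p) with
    ((INR t - x) * / INR m).
  2:{ unfold x. rewrite Hmr2. field. split; lra. }
  rewrite Rabs_mult, Rabs_inv, (Rabs_right (INR m)) by lra.
  apply Rmult_lt_reg_r with (INR m); [lra|].
  rewrite Rmult_assoc, Rinv_l, Rmult_1_r by lra.
  assert (Habs : Rabs (INR t - x) <= INR p) by (apply Rabs_le; lra).
  assert (INR p < eps * INR m).
  { assert (INR p / eps * eps = INR p) by (field; lra). nra. }
  lra.
Qed.

Lemma even_eqb x : Nat.even x = ((x mod 2) =? 0)%nat.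
Proof.
  destruct (Nat.Even_or_Odd x) as [[m ->]|[m ->]].
  - rewrite Nat.even_even. replace ((2*m) mod 2)%nat with O by (apply (Nat.mod_unique _ _ m); lia). reflexivity.
  - rewrite Nat.even_odd. replace ((2*m+1) mod 2)%nat with 1%nat by (apply (Nat.mod_unique _ _ m); lia). reflexivity.
Qed.

Lemma odd_eqb x : Nat.odd x = ((x mod 2) =? 1)%nat.
Proof.
  destruct (Nat.Even_or_Odd x) as [[m ->]|[m ->]].
  - rewrite <- Nat.negb_even, Nat.even_even. replace ((2*m) mod 2)%nat with O by (apply (Nat.mod_unique _ _ m); lia). reflexivity.
  - rewrite <- Nat.negb_even, Nat.even_odd. replace ((2*m+1) mod 2)%nat with 1%nat by (apply (Nat.mod_unique _ _ m); lia). reflexivity.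
Qed.

Lemma AB_R n : 3 * INR (A n) = 4 * 2^n - (-1)^n /\ 3 * INR (B n) = 2 * 2^n + (-1)^n.
Proof.
  induction n as [|n [IH1 IH2]].
  - simpl. unfold A, B. simpl. split; lra.
  - unfold A, B in *. simpl AB. cbv zeta. simpl fst. simpl snd.
    rewrite !plus_INR. simpl pow. simpl (INR 0). split; lra.
Qed.

Theorem corollary3p1 :
  exists nu0 nu1 : nat -> R,
    (forall n : nat,
        has_density (fun k => Nat.even (collatz_iter n k)) (nu0 n) /\
        has_density (fun k => Nat.odd (collatz_iter n k)) (nu1 n)) /\
    Un_cv nu0 (2 / 3) /\ Un_cv nu1 (1 / 3).
Proof.
  exists (fun n => INR (A n) / INR (2^(S n))), (fun n => INR (B n) / INR (2^(S n))).
  split; [|split].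
  - intros n. destruct (Sall n) as [HS _].
    assert (Hp : (0 < 2^(S n))%nat) by apply pow2_pos.
    split; apply density_periodic; try exact Hp; intros a.
    + pose proof (HS 1%nat 1%nat a 0%nat ltac:(lia) ltac:(exists O; lia) ltac:(simpl; lia)) as T.
      rewrite Nat.add_1_r in T. simpl Nat.even in T. rewrite <- T.
      apply cnt0_ext. intros j. rewrite even_eqb. f_equal. f_equal. f_equal. lia.
    + pose proof (HS 1%nat 1%nat a 1%nat ltac:(lia) ltac:(exists O; lia) ltac:(simpl; lia)) as T.
      rewrite Nat.add_1_r in T. simpl Nat.even in T. rewrite <- T.
      apply cnt0_ext. intros j. rewrite odd_eqb. f_equal. f_equal. f_equal. lia.
  - intros eps Heps.
    destruct (pow_lt_1_zero (/2) ltac:(rewrite Rabs_right; lra) eps Heps) as [N HN].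
    exists N. intros n Hn. specialize (HN n Hn).
    destruct (AB_R n) as [H1 _].
    assert (HX : 0 < 2^n) by (apply pow_lt; lra).
    rewrite pow_inv, Rabs_right in HN by (left; apply Rinv_0_lt_compat; lra).
    unfold R_dist. rewrite pow_INR. replace (INR 2) with 2 by (simpl; lra). replace (2^S n) with (2*2^n) by reflexivity.
    replace (INR (A n) / (2 * 2 ^ n) - 2/3) with ((-1)^n * (- / (6 * 2^n))).
    2:{ field_simplify_eq; [|lra]. lra. }
    rewrite Rabs_mult, pow_1_abs, Rabs_Ropp, Rabs_inv, Rabs_right by lra.
    rewrite Rinv_mult. assert (0 < / 2^n) by (apply Rinv_0_lt_compat; lra). lra.
  - intros eps Heps.
    destruct (pow_lt_1_zero (/2) ltac:(rewrite Rabs_right; lra) eps Heps) as [N HN].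
    exists N. intros n Hn. specialize (HN n Hn).
    destruct (AB_R n) as [_ H1].
    assert (HX : 0 < 2^n) by (apply pow_lt; lra).
    rewrite pow_inv, Rabs_right in HN by (left; apply Rinv_0_lt_compat; lra).
    unfold R_dist. rewrite pow_INR. replace (INR 2) with 2 by (simpl; lra). replace (2^S n) with (2*2^n) by reflexivity.
    replace (INR (B n) / (2 * 2 ^ n) - 1/3) with ((-1)^n * (/ (6 * 2^n))).
    2:{ field_simplify_eq; [|lra]. lra. }
    rewrite Rabs_mult, pow_1_abs, Rabs_inv, Rabs_right by lra.
    rewrite Rinv_mult. assert (0 < / 2^n) by (apply Rinv_0_lt_compat; lra). lra.
Qed.
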